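(* Let $m,\Delta$ be positive integers and $X\subseteq\{-\Delta,\dots,\Delta\}^m$ such that $C=\mathrm{cone}(X)$ is pointed. Then there is a halfspace $H=\{x\in\mathbb{R}^m: d^{\mathsf T}x\ge 0\}$ with $C\cap H=\{\mathbf 0\}$, defined by some $d\in\mathbb{Z}^m$ with \[ \|d\|_\infty\le\Delta^m m^{m/2+1}. \]
   Context: $\mathrm{cone}(X)=\{\sum_{x\in X}\lambda_x x:\lambda_x\ge0\}$. A cone is pointed if $\mathbf 0$ is a vertex of it. *)

(* Defs.v *)
From mathcomp Require Import all_boot all_order all_algebra.
Set Implicit Arguments. Unset Strict Implicit. Unset Printing Implicit Defensive.
Import Order.TTheory GRing.Theory Num.Theory.
Local Open Scope ring_scope.

Definition intvec (R : numDomainType) (m : nat) (x : 'rV[int]_m) : 'rV[R]_m :=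
  map_mx (fun z : int => z%:~R) x.

Definition cone (R : numDomainType) (m : nat) (X : seq 'rV[int]_m)
  (v : 'rV[R]_m) : Prop :=
  exists lam : 'I_(size X) -> R,
    (forall i, 0 <= lam i) /\
    v = \sum_(i < size X) lam i *: intvec R (nth 0 X i).

Definition is_vertex (R : numDomainType) (m : nat) (C : 'rV[R]_m -> Prop)
  (p : 'rV[R]_m) : Prop :=
  C p /\
  forall (y z : 'rV[R]_m) (t : R), C y -> C z -> 0 < t -> t < 1 ->
    p = t *: y + (1 - t) *: z -> y = p /\ z = p.

Definition pointed (R : numDomainType) (m : nat) (C : 'rV[R]_m -> Prop) : Prop :=
  is_vertex C 0.

Definition dotZ (R : numDomainType) (m : nat) (d : 'rV[int]_m) (x : 'rV[R]_m) : R :=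
  \sum_(i < m) (d 0 i)%:~R * x 0 i.

(* Main.v *)
Require Import Defs.
From mathcomp Require Import all_boot all_order all_algebra.
From mathcomp Require Import lra zify.
From mathcomp Require all_field spectral sesquilinear.
Import Order.TTheory GRing.Theory Num.Theory.
Local Open Scope ring_scope.

Module Had.
Import all_field spectral sesquilinear.
Set Implicit Arguments. Unset Strict Implicit. Unset Printing Implicit Defensive.
Import Order.TTheory GRing.Theory Num.Theory Num.Def.
Local Open Scope ring_scope.
Local Open Scope sesquilinear_scope.

Section Had.
Local Notation C := algC.

Lemma rowmx_conj_entry n p (B : 'M[C]_(p, n)) i :
  (B *m B ^t conjC) i i = \sum_j `|B i j| ^+ 2.
Proof. by rewrite mxE; apply: eq_bigr => j _; rewrite !mxE normCK. Qed.

Lemma hadamardC n (A : 'M[C]_n) :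
  `|\det A| ^+ 2 <= \prod_i \sum_j `|A i j| ^+ 2.
Proof.
set Q := schmidt A.
have QU : Q *m Q ^t conjC = 1%:M by apply/eqP; exact: (schmidt_unitarymx A (leqnn n)).
have QU' : Q ^t conjC *m Q = 1%:M by apply: mulmx1C.
pose L := A *m Q ^t conjC.
have AL : A = L *m Q by rewrite /L -mulmxA QU' mulmx1.
have detQ : `|\det Q| ^+ 2 = 1.
  have := congr1 determinant QU; rewrite det_mulmx det1 det_map_mx det_tr.
  by rewrite normCK.
have Ltrig : is_trig_mx L.
  apply/is_trig_mxP => i j ltij.
  have sub := row_schmidt_sub A i.
  have : (row i A <= kermx ((row j Q) ^t conjC))%MS.
    apply: (submx_trans sub); apply/sumsmx_subP => k lekj.
    rewrite genmxE; apply/sub_kermxP.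
    have /row_unitarymxP /(_ k j) := schmidt_unitarymx A (leqnn n).
    rewrite dotmxE => e.
    apply/rowP => z; rewrite ord1 e (_ : (0 : 'M[C]_1) 0 0 = 0); last by rewrite mxE.
    have -> : (k == j) = false.
      by apply/negbTE; rewrite -val_eqE /= neq_ltn (leq_ltn_trans lekj ltij).
    by [].
  move/sub_kermxP => /rowP /(_ 0).
  rewrite [X in _ = X -> _]mxE => <-; rewrite /L !mxE; apply: eq_bigr => z _; rewrite !mxE //.
have AA : A *m A ^t conjC = L *m L ^t conjC.
  rewrite {1 2}AL trmx_mul map_mxM mulmxA -(mulmxA L) QU mulmx1 //.
have -> : `|\det A| ^+ 2 = \prod_i `|L i i| ^+ 2.
  rewrite AL det_mulmx normrM exprMn detQ mulr1 det_trig // normr_prod.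
  by rewrite prodrXl.
apply: ler_prod => i _; rewrite exprn_ge0 //=.
rewrite -rowmx_conj_entry AA rowmx_conj_entry.
rewrite (bigD1 i) //= lerDl sumr_ge0 // => j _; exact: exprn_ge0.
Qed.
End Had.

Lemma hadamardZ n (A : 'M[int]_n) :
  (\det A) ^+ 2 <= \prod_i \sum_j (A i j) ^+ 2.
Proof.
have := hadamardC (map_mx (intr : int -> algC) A).
rewrite det_map_mx -intr_norm -rmorphXn.
have -> : \prod_i \sum_j `|(map_mx (intr : int -> algC) A) i j| ^+ 2
   = ((\prod_i \sum_j (A i j) ^+ 2 : int))%:~R.
  rewrite rmorph_prod; apply: eq_bigr => i _; rewrite rmorph_sum.
  by apply: eq_bigr => j _; rewrite mxE -intr_norm -rmorphXn /= -normrX ger0_norm // sqr_ge0.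
by rewrite ler_int -normrX ger0_norm // sqr_ge0.
Qed.

End Had.

Set Implicit Arguments. Unset Strict Implicit. Unset Printing Implicit Defensive.

Section Dot.
Variable R : realFieldType.
Variable m : nat.
Implicit Types u v w : 'rV[R]_m.

Definition dot u v : R := \sum_(i < m) u 0 i * v 0 i.

Lemma dotC u v : dot u v = dot v u.
Proof. by apply: eq_bigr => i _; rewrite mulrC. Qed.
Lemma dotDl u v w : dot (u + v) w = dot u w + dot v w.
Proof. by rewrite /dot -big_split; apply: eq_bigr => i _; rewrite !mxE mulrDl. Qed.
Lemma dotZl a u w : dot (a *: u) w = a * dot u w.
Proof. by rewrite /dot mulr_sumr; apply: eq_bigr => i _; rewrite !mxE mulrA. Qed.
Lemma dotNl u w : dot (- u) w = - dot u w.
Proof. by rewrite -scaleN1r dotZl mulN1r. Qed.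
Lemma dotBl u v w : dot (u - v) w = dot u w - dot v w.
Proof. by rewrite dotDl dotNl. Qed.
Lemma dot0l w : dot 0 w = 0.
Proof. by rewrite /dot big1 // => i _; rewrite mxE mul0r. Qed.
Lemma dotDr u v w : dot w (u + v) = dot w u + dot w v.
Proof. by rewrite !(dotC w) dotDl. Qed.
Lemma dotZr a u w : dot w (a *: u) = a * dot w u.
Proof. by rewrite !(dotC w) dotZl. Qed.
Lemma dotNr u w : dot w (- u) = - dot w u.
Proof. by rewrite !(dotC w) dotNl. Qed.
Lemma dot0r w : dot w 0 = 0.
Proof. by rewrite dotC dot0l. Qed.
Lemma dot_sumr I (r : seq I) (P : pred I) (F : I -> 'rV[R]_m) w :
  dot w (\sum_(i <- r | P i) F i) = \sum_(i <- r | P i) dot w (F i).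
Proof.
elim/big_rec2: _ => [|i y1 y2 _ <-]; first by rewrite dot0r.
by rewrite dotDr.
Qed.
Lemma dot_gt0 u : u != 0 -> 0 < dot u u.
Proof.
move=> u0; have [j uj] : exists j, u 0 j != 0.
  apply/existsP; apply: contraNT u0; rewrite negb_exists => /forallP H.
  by apply/eqP/rowP => j; rewrite mxE; apply/eqP; rewrite -[_ == _]negbK H.
rewrite /dot (bigD1 j) //=.
have h1 : 0 < u 0 j * u 0 j by rewrite -expr2 lt_def sqr_ge0 andbT sqrf_eq0.
have h2 : 0 <= \sum_(i < m | i != j) u 0 i * u 0 i.
  by apply: sumr_ge0 => i _; rewrite -expr2 sqr_ge0.
lra.
Qed.

Lemma perturb (ys : seq 'rV[R]_m) e f :
  (forall i, (i < size ys)%N -> ys`_i != 0 -> dot e ys`_i < 0) ->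
  exists2 eps : R, 0 < eps & forall eps', 0 < eps' -> eps' <= eps ->
    forall i, (i < size ys)%N -> ys`_i != 0 -> dot (e + eps' *: f) ys`_i < 0.
Proof.
elim: ys => [|y ys IH] H; first by exists 1 => //.
have [|e1 e1p He1] := IH.
  by move=> i hi; apply: (H i.+1).
have [y0|yn0] := eqVneq y 0.
  exists e1 => // eps' h1 h2 [|i] //=; first by rewrite y0 eqxx.
  by move=> hi; apply: He1.
have ey := H 0%N isT yn0; rewrite /= in ey.
pose ey2 := (- dot e y) / (`|dot f y| + 1).
have ey2p : 0 < ey2 by rewrite divr_gt0 // ?oppr_gt0 // ltr_wpDl.
exists (Order.min e1 ey2); first by rewrite lt_min e1p ey2p.
move=> eps' h1; rewrite le_min => /andP[h2 h3] [|i] /=; last first.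
  by move=> hi; apply: He1.
move=> _ _; rewrite dotDl dotZl.
have : eps' * dot f y < - dot e y.
  apply: (le_lt_trans (ler_norm _)); rewrite normrM (gtr0_norm h1).
  apply: (lt_le_trans (y := eps' * (`|dot f y| + 1))).
    by rewrite ltr_pM2l // ltrDl.
  by rewrite -ler_pdivlMr // ltr_wpDl.
lra.
Qed.


Definition gordan_hyp (xs : seq 'rV[R]_m) :=
  forall lam : nat -> R, (forall i, 0 <= lam i) ->
     \sum_(i < size xs) lam i *: xs`_i = 0 ->
     forall i, (i < size xs)%N -> lam i *: xs`_i = 0.

Lemma gordan_n n (xs : seq 'rV[R]_m) : size xs = n -> gordan_hyp xs ->
  exists d, forall i, (i < size xs)%N -> xs`_i != 0 -> dot d xs`_i < 0.
Proof.
elim: n xs => [|n IH] [|x ys] //= szs H; first by exists 0.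
case: szs => szs.
have Hys : gordan_hyp ys.
  move=> lam lam0 s0 i hi.
  pose lam' k := if k is k'.+1 then lam k' else 0.
  have l0 : forall k, 0 <= lam' k by case.
  have sl : \sum_(k < (size ys).+1) lam' k *: (x :: ys)`_k = 0.
    by rewrite big_ord_recl /= scale0r add0r.
  exact: (H lam' l0 sl i.+1 hi).
have [d Hd] := IH ys szs Hys.
have [x0|xn0] := eqVneq x 0.
  by exists d => -[|i] /= hi; [rewrite x0 eqxx | exact: Hd].
have [dxn|dxp] := ltP (dot d x) 0.
  by exists d => -[|i] /= hi; [ | exact: Hd].
set c := dot d x in dxp.
pose g y := (- dot d y) *: x + c *: y.
pose zs := map g ys.
have ndy : forall i, (i < size ys)%N -> 0 <= - dot d ys`_i.
  move=> i hi; have [->|yn] := eqVneq ys`_i 0; first by rewrite dot0r oppr0.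
  by rewrite oppr_ge0 ltW // Hd.
have Hzs : gordan_hyp zs.
  move=> lam lam0; rewrite size_map => s0 i hi.
  pose mu k := if k is k'.+1 then c * lam k'
               else \sum_(j < size ys) lam j * - dot d ys`_j.
  have mu0 : forall k, 0 <= mu k.
    case => [|k] /=; last by rewrite mulr_ge0.
    by apply: sumr_ge0 => j _; rewrite mulr_ge0 // ndy.
  have smu : \sum_(k < (size ys).+1) mu k *: (x :: ys)`_k = 0.
    rewrite -[RHS]s0 big_ord_recl /= scaler_suml -big_split /=; apply: eq_bigr => j _.
    rewrite (nth_map 0) // /g scalerDr !scalerA (mulrC c) //.
  have := H mu mu0 smu 0%N isT; rewrite /= => /eqP; rewrite scaler_eq0 (negPf xn0) orbF.
  move/eqP/psumr_eq0P => Hz.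
  have /eqP := Hz (fun j _ => mulr_ge0 (lam0 j) (ndy j (ltn_ord j))) (Ordinal hi) isT.
  rewrite /= mulf_eq0 => /orP[/eqP ->|]; first by rewrite scale0r.
  rewrite oppr_eq0 => /eqP dy0.
  have [y0|yn] := eqVneq ys`_i 0; last by move: (Hd i hi yn); rewrite dy0 ltxx.
  by rewrite (nth_map 0) // /g y0 dot0r oppr0 !scale0r ?scaler0 addr0 ?scaler0.
have [d' Hd'] := IH zs (etrans (size_map _ _) szs) Hzs.
pose e := c *: d' - dot d' x *: d.
have He : forall i, (i < size ys)%N -> ys`_i != 0 -> dot e ys`_i < 0.
  move=> i hi yn.
  have zn : zs`_i != 0.
    rewrite (nth_map 0) //; apply/negP => /eqP z0.
    pose mu k := if k == 0%N then - dot d ys`_i else if k == i.+1 then c else 0.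
    have mu0 : forall k, 0 <= mu k.
      by move=> k; rewrite /mu; case: eqP => _; [exact: ndy | case: eqP].
    have smu : \sum_(k < (size ys).+1) mu k *: (x :: ys)`_k = 0.
      rewrite big_ord_recl /= -[RHS]z0 /g; congr (_ + _).
      rewrite (bigD1 (Ordinal hi)) //= /mu /= eqxx big1 ?addr0 // => j.
      rewrite -val_eqE /= eqSS => /negPf ->; by rewrite scale0r.
    have := H mu mu0 smu 0%N isT; rewrite /= => /eqP; rewrite scaler_eq0 (negPf xn0) orbF.
    by rewrite oppr_eq0 => /eqP dy0; move: (Hd i hi yn); rewrite dy0 ltxx.
  have := Hd' i; rewrite size_map => /(_ hi zn); rewrite (nth_map 0) // /g.
  rewrite dotDr !dotZr /e dotBl !dotZl (dotC d' ys`_i) (dotC d ys`_i) (dotC d' x).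
  move=> h; nra.
have [eps epsp Heps] := perturb (-x) He.
exists (e + eps *: - x) => -[|i] /= hi; last by apply: Heps.
move=> _; rewrite dotDl dotZl dotNl /e dotBl !dotZl -/c (dotC d' x).
have := dot_gt0 xn0; nra.
Qed.

End Dot.


Section Walk.
Variable R : rcfType.
Variable m : nat.
Variable X : seq 'rV[int]_m.

Definition Xs := [seq x <- X | x != 0].
Local Notation N := (size Xs + m)%N.

Definition cand (i : 'I_N) : 'rV[int]_m :=
  match split i with inl k => Xs`_k | inr j => delta_mx 0 j end.
Definition rhs (i : 'I_N) : int :=
  match split i with inl _ => -1 | inr _ => 0 end.

Definition feasible (d : 'rV[R]_m) :=
  forall x, x \in X -> x != 0 -> dot d (intvec R x) <= -1.

Definition active (d : 'rV[R]_m) (i : 'I_N) :=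
  dot d (intvec R (cand i)) == (rhs i)%:~R.

Definition AM (d : 'rV[R]_m) : 'M[R]_(N, m) :=
  \matrix_(i, j) (if active d i then intvec R (cand i) 0 j else 0).

Lemma rowAM d i : row i (AM d) = if active d i then intvec R (cand i) else 0.
Proof. by apply/rowP => j; rewrite !mxE; case: ifP => _; rewrite ?mxE. Qed.

Lemma cand_lshift (k : 'I_(size Xs)) : cand (lshift m k) = Xs`_k.
Proof. by rewrite /cand (unsplitK (inl _ k)). Qed.
Lemma cand_rshift j : cand (rshift (size Xs) j) = delta_mx 0 j.
Proof. by rewrite /cand (unsplitK (inr _ j)). Qed.
Lemma rhs_lshift (k : 'I_(size Xs)) : rhs (lshift m k) = -1.
Proof. by rewrite /rhs (unsplitK (inl _ k)). Qed.
Lemma rhs_rshift j : rhs (rshift (size Xs) j) = 0.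
Proof. by rewrite /rhs (unsplitK (inr _ j)). Qed.

Lemma Xs_in (k : 'I_(size Xs)) : Xs`_k \in X /\ Xs`_k != 0.
Proof. by have := mem_nth 0 (ltn_ord k); rewrite mem_filter => /andP[]. Qed.

Lemma dot_delta (w : 'rV[R]_m) j : dot w (intvec R (delta_mx 0 j)) = w 0 j.
Proof.
rewrite /dot (bigD1 j) //= big1 ?addr0 => [|k kj]; rewrite !mxE eqxx /=.
  by rewrite eqxx rmorph_nat mulr1n mulr1.
by rewrite (negPf kj) rmorph_nat mulr0n mulr0.
Qed.

Lemma rank_up d d' (w : 'rV[R]_m) i1 :
  (forall i, active d i -> dot (intvec R (cand i)) w = 0) ->
  (forall i, active d i -> active d' i) ->
  active d' i1 -> dot (intvec R (cand i1)) w != 0 ->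
  (\rank (AM d) < \rank (AM d'))%N.
Proof.
move=> orth incl a1 nz.
have sub : (AM d <= AM d')%MS.
  apply/row_subP => i; rewrite rowAM; case: ifP => ai; last by rewrite sub0mx.
  by have := row_sub i (AM d'); rewrite rowAM (incl i ai).
have nsub : ~~ (AM d' <= AM d)%MS.
  apply/negP => /row_subP /(_ i1); rewrite rowAM a1 => /submxP [D HD].
  move: nz; rewrite HD; apply/negP; rewrite negbK; apply/eqP.
  have -> : dot (D *m AM d) w = \sum_(i < N) D 0 i * dot (row i (AM d)) w.
    rewrite /dot; under eq_bigr => j _ do rewrite mxE mulr_suml.
    rewrite exchange_big /=; apply: eq_bigr => i _; rewrite mulr_sumr.
    by apply: eq_bigr => j _; rewrite !mxE mulrA.
  rewrite big1 // => i _; rewrite rowAM; case: ifP => ai.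
    by rewrite orth // mulr0.
  by rewrite dot0l mulr0.
have : (AM d < AM d')%MS by rewrite ltmxE sub nsub.
by rewrite ltmxErank => /andP[].
Qed.


Lemma argmin_ex (I : finType) (P : pred I) (F : I -> R) i0 :
  P i0 -> exists2 i, P i & forall j, P j -> F i <= F j.
Proof. by move=> Pi0; case: (arg_minP F Pi0) => i Pi Hi; exists i. Qed.

Lemma Xs_idx x : x \in X -> x != 0 -> exists k : 'I_(size Xs), Xs`_k = x.
Proof.
move=> xX xn0; have xXs : x \in Xs by rewrite mem_filter xn0 xX.
have hi : (index x Xs < size Xs)%N by rewrite index_mem.
by exists (Ordinal hi); rewrite /= nth_index.
Qed.

Lemma step d : feasible d -> (\rank (AM d) < m)%N ->
  exists d', feasible d' /\ (\rank (AM d) < \rank (AM d'))%N.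
Proof.
move=> fd rk.
have [u uK un0] : exists2 u : 'rV[R]_m, (u <= kermx (AM d)^T)%MS & u != 0.
  by apply/rowV0Pn; rewrite -mxrank_eq0 mxrank_ker mxrank_tr -lt0n subn_gt0.
have orth : forall i, active d i -> dot (intvec R (cand i)) u = 0.
  move=> i ai; move/sub_kermxP: uK => /rowP /(_ i); rewrite [RHS]mxE => <-.
  by rewrite dotC /dot mxE; apply: eq_bigr => j _; rewrite !mxE ai.
have [/existsP[k xk]|nex] := boolP [exists k : 'I_(size Xs), dot (intvec R Xs`_k) u != 0].
  pose u' := if 0 < dot (intvec R Xs`_k) u then u else - u.
  have orth' : forall i, active d i -> dot (intvec R (cand i)) u' = 0.
    by move=> i ai; rewrite /u'; case: ifP; rewrite ?dotNr orth ?oppr0.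
  have pk : 0 < dot (intvec R Xs`_k) u'.
    rewrite /u'; case: ifP => // /negbT; rewrite -leNgt dotNr oppr_gt0 => h.
    by rewrite lt_neqAle xk h.
  pose P := fun k : 'I_(size Xs) => 0 < dot (intvec R Xs`_k) u'.
  pose F := fun k : 'I_(size Xs) => (-1 - dot d (intvec R Xs`_k)) / dot (intvec R Xs`_k) u'.
  have [k0 Pk0 Hk0] := argmin_ex F (pk : P k).
  pose t := F k0.
  have t0 : 0 <= t.
    have [h1 h2] := Xs_in k0; have := fd _ h1 h2 => h.
    apply: divr_ge0; [lra | exact: ltW].
  pose d' := d + t *: u'.
  have dd' : forall v, dot d' v = dot d v + t * dot u' v.
    by move=> v; rewrite dotDl dotZl.
  exists d'; split.
    move=> x xX xn0; rewrite dd'; have := fd x xX xn0.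
    have [pos|npos] := ltP 0 (dot u' (intvec R x)).
      have [k1 hk1] := Xs_idx xX xn0.
      have pk1 : P k1 by rewrite /P hk1 (dotC (intvec R x)).
      have h := Hk0 k1 pk1; rewrite -/t /F hk1 (dotC (intvec R x)) ler_pdivlMr // in h.
      move=> h2; lra.
    move=> h; have : t * dot u' (intvec R x) <= 0 by rewrite mulr_ge0_le0.
    lra.
  apply: (@rank_up d d' u' (lshift m k0)) => //.
  - by move=> i ai; rewrite /active dd' (dotC u') orth' // mulr0 addr0.
  - rewrite /active cand_lshift rhs_lshift dd' (dotC u') /t /F divfK ?(lt0r_neq0 Pk0) //.
    apply/eqP; rewrite rmorphN1; lra.
  - by rewrite cand_lshift (lt0r_neq0 Pk0).
have allz : forall k : 'I_(size Xs), dot (intvec R Xs`_k) u = 0.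
  by move=> k; move: nex; rewrite negb_exists => /forallP /(_ k); rewrite negbK => /eqP.
have [j uj] : exists j, u 0 j != 0.
  apply/existsP; apply: contraNT un0; rewrite negb_exists => /forallP H.
  by apply/eqP/rowP => j; rewrite mxE; apply/eqP; rewrite -[_ == _]negbK H.
pose d' := d - (d 0 j / u 0 j) *: u.
have dd' : forall v, dot d' v = dot d v - (d 0 j / u 0 j) * dot u v.
  by move=> v; rewrite dotBl dotZl.
exists d'; split.
  move=> x xX xn0; have [k1 hk1] := Xs_idx xX xn0.
  by rewrite dd' (dotC u) -hk1 allz mulr0 subr0 hk1 fd.
apply: (@rank_up d d' u (rshift (size Xs) j)) => //.
- by move=> i ai; rewrite /active dd' (dotC u) orth // mulr0 subr0.
- rewrite /active cand_rshift rhs_rshift dd' !dot_delta divfK //.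
  by rewrite subrr.
- by rewrite cand_rshift dotC dot_delta.
Qed.

Lemma walk n d : feasible d -> (m - \rank (AM d) <= n)%N ->
  exists d', feasible d' /\ \rank (AM d') = m.
Proof.
elim: n d => [|n IH] d fd hn.
  exists d; split => //; apply/eqP; rewrite eqn_leq rank_leq_col /=.
  by rewrite -subn_eq0 -leqn0.
have [lt|ge] := ltnP (\rank (AM d)) m.
  have [d' [fd' r']] := step fd lt.
  by apply: (IH d' fd'); lia.
by exists d; split => //; apply/eqP; rewrite eqn_leq rank_leq_col.
Qed.

Lemma final d : feasible d -> \rank (AM d) = m ->
  exists (dI : 'rV[int]_m) (c : R) (Mi : 'M[int]_m),
   [/\ 0 < c, intvec R dI = c *: d,
       (forall k j, exists i, Mi k j = cand i 0 j)
     & forall j, `|dI 0 j| <= \sum_k `|\adj Mi j k| ].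
Proof.
move=> fd rk.
have full : row_full (AM d) by rewrite /row_full; apply/eqP.
pose f := fullrankfun full.
have Mu : rowsub f (AM d) \in unitmx := fullrowsub_unit full.
have act : forall k, active d (f k).
  move=> k; apply/negPn/negP => nk.
  have : row k (rowsub f (AM d)) = 0 by rewrite row_rowsub rowAM (negbTE nk).
  rewrite rowE => h; have := mulmxK Mu (delta_mx 0 k : 'rV[R]_m); rewrite h mul0mx.
  by move/rowP => /(_ k) /eqP; rewrite !mxE !eqxx /= eq_sym oner_eq0.
pose Mi : 'M[int]_m := \matrix_(k, j) cand (f k) 0 j.
pose b : 'cV[int]_m := \col_k rhs (f k).
have MR : map_mx (fun z : int => z%:~R) Mi = rowsub f (AM d) :> 'M[R]_m.
  by apply/matrixP => k j; rewrite !mxE (act k).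
have Md : rowsub f (AM d) *m d^T = map_mx (fun z : int => z%:~R) b.
  apply/matrixP => k z; rewrite ord1 !mxE.
  have := act k; rewrite /active => /eqP <-.
  by rewrite dotC /dot; apply: eq_bigr => j _; rewrite !mxE (act k).
have dR : \det (rowsub f (AM d)) = (\det Mi)%:~R by rewrite -MR det_map_mx.
have key : (\det Mi)%:~R *: d^T = map_mx (fun z : int => z%:~R) (\adj Mi *m b).
  by rewrite map_mxM map_mx_adj MR -Md mulmxA mul_adj_mx mul_scalar_mx dR.
have detn0 : \det Mi != 0.
  by move: Mu; rewrite unitmxE unitfE dR intr_eq0.
pose s : int := if 0 <= \det Mi then 1 else -1.
have sdet : s * \det Mi = `|\det Mi|.
  rewrite /s; case: ifP => h; first by rewrite mul1r ger0_norm.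
  by rewrite mulN1r ler0_norm // ltW // ltNge h.
have s1 : `|s| = 1 by rewrite /s; case: ifP.
set v := \adj Mi *m b in key.
pose dI : 'rV[int]_m := (s *: v)^T.
exists dI, `|\det Mi|%:~R, Mi; split.
- by rewrite ltr0z normr_gt0.
- apply/rowP => j; rewrite !mxE.
  have := congr1 (fun M : 'cV[R]_m => M j 0) key; rewrite /= !mxE => h.
  by rewrite intrM -h mulrA -intrM sdet.
- by move=> k j; exists (f k); rewrite mxE.
move=> j; rewrite !mxE normrM s1 mul1r.
apply: (le_trans (ler_norm_sum _ _ _)); apply: ler_sum => k _.
rewrite normrM ler_piMr // /b mxE /rhs.
by case: (split (f k)) => _; rewrite ?normrN ?normr0 ?normr1.
Qed.

End Walk.


Section Final.
Variable R : rcfType.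
Variable m : nat.

Lemma intvec0 : intvec R (0 : 'rV[int]_m) = 0.
Proof. by apply/rowP => j; rewrite !mxE. Qed.

Lemma intvec_eq0 (x : 'rV[int]_m) : (intvec R x == 0) = (x == 0).
Proof.
apply/eqP/eqP => [h|->]; last exact: intvec0.
apply/rowP => j; have /rowP /(_ j) := h; rewrite !mxE => /eqP.
by rewrite intr_eq0 => /eqP.
Qed.

Lemma dotZE (d : 'rV[int]_m) (v : 'rV[R]_m) : dotZ d v = dot (intvec R d) v.
Proof. by apply: eq_bigr => i _; rewrite mxE. Qed.

Variable X : seq 'rV[int]_m.

Lemma pointed_hyp : pointed (@cone R m X) -> gordan_hyp (map (@intvec R m) X).
Proof.
move=> [_ pt] lam lam0; rewrite size_map => s0 i hi.
have nthv : forall j : 'I_(size X), (map (@intvec R m) X)`_j = intvec R (nth 0 X j).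
  by move=> j; rewrite (nth_map 0).
rewrite (nth_map 0) //.
pose a (j : 'I_(size X)) := if val j == i then 2 * lam i else 0.
pose bb (j : 'I_(size X)) := if val j == i then 0 else 2 * lam j.
pose y := \sum_(j < size X) a j *: intvec R (nth 0 X j).
pose z := \sum_(j < size X) bb j *: intvec R (nth 0 X j).
have cy : cone X y.
  exists a; split => // j; rewrite /a; case: ifP => _ //; rewrite mulr_ge0 //.
have cz : cone X z.
  exists bb; split => // j; rewrite /bb; case: ifP => _ //; rewrite mulr_ge0 //.
have h0 : 0 = 2^-1 *: y + (1 - 2^-1) *: z.
  rewrite -[LHS]s0 /y /z !scaler_sumr -big_split /=; apply: eq_bigr => j _.
  rewrite nthv !scalerA -scalerDl; congr (_ *: _).
  rewrite /a /bb; case: eqP => [<-|_]; rewrite mulr0 ?addr0 ?add0r mulrA.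
    by rewrite mulVf ?mul1r // pnatr_eq0.
  have -> : (1 - 2^-1 : R) = 2^-1.
    by apply: (mulIf (_ : (2 : R) != 0)); rewrite ?pnatr_eq0 // mulrBl mulVf ?pnatr_eq0 // mul1r; lra.
  by rewrite mulVf ?mul1r // pnatr_eq0.
have h1 : (0 : R) < 2^-1 by rewrite invr_gt0.
have h2 : (2^-1 : R) < 1 by lra.
have [y0 _] := pt y z 2^-1 cy cz h1 h2 h0.
have : y = (2 * lam i) *: intvec R (nth 0 X i).
  rewrite /y (bigD1 (Ordinal hi)) //= big1 ?addr0 /a /= ?eqxx // => j.
  by rewrite -val_eqE /= => /negPf ->; rewrite scale0r.
rewrite y0 -scalerA => /esym /eqP; rewrite scaler_eq0 pnatr_eq0 /= => /eqP //.
Qed.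


Lemma init_feasible : gordan_hyp (map (@intvec R m) X) -> exists d : 'rV[R]_m, feasible X d.
Proof.
move=> gh; have [d Hd] := gordan_n (erefl _) gh.
have neg : forall x, x \in X -> x != 0 -> dot d (intvec R x) < 0.
  move=> x xX xn0; have hi : (index x X < size X)%N by rewrite index_mem.
  have := Hd (index x X); rewrite size_map (nth_map 0) // nth_index //.
  by rewrite intvec_eq0 => /(_ hi xn0).
have [/existsP [j0 Pj0]|none] := boolP [exists j : 'I_(size X), nth 0 X j != 0].
  have [j1 Pj1 Hj1] := @argmin_ex R _ (fun j : 'I_(size X) => nth 0 X j != 0)
     (fun j => - dot d (intvec R (nth 0 X j))) _ Pj0.
  set M := dot d (intvec R (nth 0 X j1)) in Hj1.
  have Mn : M < 0 := neg _ (mem_nth 0 (ltn_ord j1)) Pj1.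
  pose t := - M^-1.
  have tp : 0 < t by rewrite /t oppr_gt0 invr_lt0.
  have tM : t * M = -1 by rewrite /t mulNr mulVf // ltr0_neq0.
  exists (t *: d) => x xX xn0; rewrite dotZl -tM ler_pM2l //.
  have hi : (index x X < size X)%N by rewrite index_mem.
  have := Hj1 (Ordinal hi); rewrite /= nth_index // lerN2; exact.
exists 0 => x xX xn0; exfalso; move: none; rewrite negb_exists => /forallP.
have hi : (index x X < size X)%N by rewrite index_mem.
by move=> /(_ (Ordinal hi)); rewrite /= nth_index // xn0.
Qed.

Lemma adj_bound (Mi : 'M[int]_m) (Delta : nat) :
  (forall k j, `|Mi k j| <= Delta%:Z) ->
  forall j k, ((`|\adj Mi j k|)%:~R : R) <=
     Num.sqrt (m%:R : R) ^+ m.-1 * (Delta%:R : R) ^+ m.-1.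
Proof.
move=> HM j k.
rewrite mxE /cofactor normrM normrX normrN1 expr1n mul1r.
set A := row' k (col' j Mi).
have HA : forall r c, `|A r c| <= Delta%:Z by move=> r c; rewrite !mxE.
have hd : (\det A) ^+ 2 <= ((Delta%:Z) ^+ 2 *+ m) ^+ m.-1.
  apply: (le_trans (Had.hadamardZ A)).
  have -> : ((Delta%:Z) ^+ 2 *+ m) ^+ m.-1 = \prod_(r < m.-1) ((Delta%:Z) ^+ 2 *+ m).
    by rewrite prodr_const card_ord.
  apply: ler_prod => r _; rewrite sumr_ge0 => [|c _]; last exact: sqr_ge0.
  apply: (le_trans (y := \sum_(c < m.-1) (Delta%:Z) ^+ 2)).
    apply: ler_sum => c _; rewrite -real_normK ?num_real //.
    by rewrite ler_sqr ?nnegrE // HA.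
  rewrite sumr_const card_ord; apply: ler_wpMn2l; [exact: sqr_ge0 | exact: leq_pred].
have B0 : 0 <= Num.sqrt (m%:R : R) ^+ m.-1 * (Delta%:R : R) ^+ m.-1.
  by rewrite mulr_ge0 // exprn_ge0 // sqrtr_ge0.
rewrite -ler_sqr ?nnegrE // ?ler0z //.
have -> : ((`|\det A|)%:~R : R) ^+ 2 = ((\det A) ^+ 2)%:~R.
  by rewrite -rmorphXn /= real_normK ?num_real.
have -> : (Num.sqrt (m%:R : R) ^+ m.-1 * (Delta%:R : R) ^+ m.-1) ^+ 2
   = (((Delta%:Z) ^+ 2 *+ m) ^+ m.-1)%:~R.
  rewrite exprMn -!exprM mulnC !exprM sqr_sqrtr ?ler0n // -exprMn rmorphXn /=.
  by rewrite rmorphMn /= rmorphXn /= mulr_natl.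
by rewrite ler_int.
Qed.

End Final.

Unset Implicit Arguments.

Lemma fin_ineq (R : rcfType) n (a b : R) : 1 <= a -> 1 <= b ->
  a ^+ n * b ^+ n <= b ^+ n.+1 * a ^+ n.+1.
Proof.
move=> ha hb.
have a0 : 0 <= a ^+ n by rewrite exprn_ge0 // (le_trans ler01).
have b0 : 0 <= b ^+ n by rewrite exprn_ge0 // (le_trans ler01).
rewrite !exprSr mulrACA (mulrC (a ^+ n)) (mulrC b).
have hab : 1 <= a * b by nra.
have hp := mulr_ge0 b0 a0.
set p := b ^+ n * a ^+ n in hp *; set q := a * b in hab *.
nra.
Qed.

Theorem lemma10 (R : rcfType) (m Delta : nat) (X : seq 'rV[int]_m) :
  (0 < m)%N -> (0 < Delta)%N ->
  (forall x, x \in X -> forall i, `|x 0 i| <= Delta%:Z) ->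
  pointed (@cone R m X) ->
  exists d : 'rV[int]_m,
    (forall v : 'rV[R]_m, (@cone R m X v /\ 0 <= dotZ d v) <-> v = 0) /\
    (forall i, (`|d 0 i|)%:~R <=
       (Delta%:R : R) ^+ m * (Num.sqrt (m%:R : R)) ^+ m * m%:R).
Proof.
move=> m0 D0 HX pt.
have gh := pointed_hyp pt.
have [d fd] := init_feasible gh.
have [d' [fd' rk]] := walk (n := m) fd (leq_subr _ _).
have [dI [c [Mi [cp dIe Ment dIb]]]] := final fd' rk.
exists dI; split.
  move=> v; split.
    case=> -[lam [lam0 ->]] h.
    rewrite dotZE dIe dotZl dot_sumr in h.
    pose T := fun i : 'I_(size X) => lam i * dot d' (intvec R (nth 0 X i)).
    have Tle : forall i, T i <= 0.
      move=> i; rewrite /T; have [x0|xn0] := eqVneq (nth 0 X i) 0.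
        by rewrite x0 intvec0 dot0r mulr0.
      have := fd' _ (mem_nth 0 (ltn_ord i)) xn0 => h1.
      by rewrite mulr_ge0_le0 //; lra.
    have ST : \sum_i T i = 0.
      apply/eqP; rewrite eq_le; apply/andP; split; first by rewrite sumr_le0.
      have -> : \sum_i T i = \sum_(i < size X) dot d' (lam i *: intvec R (nth 0 X i)).
        by apply: eq_bigr => i _; rewrite dotZr.
      by rewrite -(pmulr_rge0 _ cp).
    have T0 : forall i, T i = 0.
      have Tn : forall i, predT i -> 0 <= - T i by move=> i _; rewrite oppr_ge0.
      have sN : \sum_(i | predT i) - T i = 0 by rewrite sumrN ST oppr0.
      move=> i; have := psumr_eq0P Tn sN (isT : predT i) => /eqP; rewrite oppr_eq0 => /eqP //.
    apply: big1 => i _.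
    have [x0|xn0] := eqVneq (nth 0 X i) 0; first by rewrite x0 intvec0 scaler0.
    have := fd' _ (mem_nth 0 (ltn_ord i)) xn0 => h1.
    have /eqP := T0 i; rewrite /T mulf_eq0 => /orP[/eqP ->|/eqP h2]; first by rewrite scale0r.
    by exfalso; move: h1; rewrite h2; lra.
  move=> ->; split; last by rewrite dotZE dot0r.
  exists (fun _ => 0); split; first by move=> i.
  by rewrite big1 // => i _; rewrite scale0r.
move=> j.
have ent : forall k j, `|Mi k j| <= Delta%:Z.
  move=> k j'; have [i ->] := Ment k j'.
  rewrite /cand; case: (split i) => [k'|j''].
    by have [h1 _] := Xs_in k'; apply: HX.
  rewrite mxE; case: (_ && _); rewrite ?normr0 ?normr1 //=.
pose B := Num.sqrt (m%:R : R) ^+ m.-1 * (Delta%:R : R) ^+ m.-1.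
apply: (le_trans (y := (\sum_k `|(\adj Mi) j k| : int)%:~R)).
  by rewrite ler_int dIb.
rewrite rmorph_sum /=.
apply: (le_trans (y := \sum_(k < m) B)).
  by apply: ler_sum => k _; apply: adj_bound.
rewrite sumr_const card_ord -[B *+ m]mulr_natr; apply: ler_wpM2r; first exact: ler0n.
have h1 : 1 <= Num.sqrt (m%:R : R).
  by rewrite -{1}sqrtr1 ler_sqrt ?ler0n // ler1n.
have h2 : 1 <= (Delta%:R : R) by rewrite ler1n.
have := @fin_ineq R m.-1 _ _ h1 h2; rewrite prednK //.
Qed.
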